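(* Let $C>0$ be a constant such that $\|x\|\le C\|x\|_*$ for all $x\in\mathbb{X}$. Let $f$ satisfy Assumptions (A) and (B), and let $\mathcal{D}$ and $\delta>0$ satisfy Assumption (E) below. Let $\nu>0$, $u\sim\mathcal{D}$, and define \[ \nabla f_\nu(x)=\mathbb{E}_u\Big[\frac{\delta}{\nu}\big(f(x+\nu u)-f(x)\big)u\Big],\qquad \nabla f_\nu(x;\xi)=\frac{\delta}{\nu}\big(f(x+\nu u;\xi)-f(x;\xi)\big)u . \] Then for all $x\in\mathbb{X}$ (and every realisation $\xi$): (a) $\|\nabla f_\nu(x)-\nabla f(x)\|_*\le \frac{\delta\nu C^2L}{2}\mathbb{E}_u[\|u\|_*^3]$; (b) $\mathbb{E}_u[\|\nabla f_\nu(x;\xi)\|_*^2]\le \frac{C^4L^2\delta^2\nu^2}{2}\mathbb{E}_u[\|u\|_*^6]+2\delta^2\mathbb{E}_u[\langle\nabla f(x;\xi),u\rangle^2\|u\|_*^2]$.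
   Context: $\mathbb{X}$ is a finite-dimensional real vector space with inner product $\langle\cdot,\cdot\rangle$ and a norm $\|\cdot\|$, with dual norm $\|g\|_*=\sup_{\|x\|\le1}\langle g,x\rangle$. $f(x)=\mathbb{E}_\xi[f(x;\xi)]$ for functions $f(\cdot;\xi):\mathbb{X}\to\mathbb{R}$. Assumption (A): for every $\xi$, $f(\cdot;\xi)$ is differentiable, $G$-Lipschitz and $\|\nabla f(x;\xi)-\nabla f(y;\xi)\|_*\le L\|x-y\|$ for all $x,y\in\mathbb{X}$. Assumption (B): $\mathbb{E}_\xi[\nabla f(x;\xi)]=\nabla f(x)$ for all $x$. Assumption (E): $\mathcal{D}$ is a probability distribution supported in $\mathbb{X}$ and there is $\delta>0$ such that, for $u\sim\mathcal{D}$, $\mathbb{E}_u[\langle g,u\rangle u]=g/\delta$ for all $g\in\mathbb{X}$. *)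

(* Defs.v *)
From HB Require Import structures.
From mathcomp Require Import all_boot all_order all_algebra.
From mathcomp Require Import all_classical all_reals all_analysis.
Set Implicit Arguments. Unset Strict Implicit. Unset Printing Implicit Defensive.
Import Order.TTheory GRing.Theory Num.Theory.
Import numFieldNormedType.Exports.
Local Open Scope classical_set_scope.
Local Open Scope ring_scope.

(* The space X is modelled as 'rV[R]_n with the standard inner product
   (every finite-dimensional real inner product space is isometric to it). *)
Definition dotv (R : realType) (n : nat) (g x : 'rV[R]_n) : R :=
  \sum_(i < n) g 0 i * x 0 i.

Definition is_norm (R : realType) (n : nat) (N : 'rV[R]_n -> R) : Prop :=
  [/\ forall x, N x = 0 -> x = 0,
      forall (a : R) x, N (a *: x) = `|a| * N x
    & forall x y, N (x + y) <= N x + N y].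

Definition dual_norm (R : realType) (n : nat) (N : 'rV[R]_n -> R) (g : 'rV[R]_n) : R :=
  sup [set dotv g x | x in [set x | N x <= 1]].

Definition Eexp (d : measure_display) (T : measurableType d) (R : realType)
  (P : probability T R) (X : T -> R) : \bar R := (\int[P]_w (X w)%:E)%E.

Definition Rexp (d : measure_display) (T : measurableType d) (R : realType)
  (P : probability T R) (X : T -> R) : R := fine (\int[P]_w (X w)%:E)%E.

Definition vexp (d : measure_display) (T : measurableType d) (R : realType) (n : nat)
  (P : probability T R) (V : T -> 'rV[R]_n) : 'rV[R]_n :=
  \row_i Rexp P (fun w => V w 0 i).

(* Main.v *)
Require Import Defs.
From HB Require Import structures.
From mathcomp Require Import all_boot all_order all_algebra.
From mathcomp Require Import all_classical all_reals all_analysis.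
From mathcomp Require Import lra ring.
Set Implicit Arguments. Unset Strict Implicit. Unset Printing Implicit Defensive.
Import Order.TTheory GRing.Theory Num.Theory.
Import numFieldNormedType.Exports.
Local Open Scope classical_set_scope.
Local Open Scope ring_scope.
Section NormFacts.
Variables (R : realType) (n : nat) (N : 'rV[R]_n -> R).
Hypothesis hN : is_norm N.

Lemma N0 : N 0 = 0.
Proof. by case: hN => _ hZ _; rewrite -(scale0r (0 : 'rV[R]_n)) hZ normr0 mul0r. Qed.

Lemma NN x : N (- x) = N x.
Proof. by case: hN => _ hZ _; rewrite -scaleN1r hZ normrN normr1 mul1r. Qed.

Lemma N_ge0 x : 0 <= N x.
Proof.
case: hN => _ _ hT; have := hT x (- x); rewrite subrr N0 NN.
by move=> h; lra.
Qed.

Lemma N_sum x : N x <= \sum_(i < n) `|x 0 i| * N 'e_i.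
Proof.
case: hN => _ hZ hT.
have -> : N x = N (\sum_(j < n) x 0 j *: 'e_j) by rewrite -row_sum_delta.
rewrite /index_enum.
elim: (Finite.enum _) => [|a l IH]; first by rewrite !big_nil N0.
by rewrite !big_cons (le_trans (hT _ _)) // hZ lerD2l.
Qed.

End NormFacts.

Lemma rat_approx (R : realType) (n : nat) (g : 'rV[R]_n) (e : R) : 0 < e ->
  exists q : 'rV[rat]_n, forall i, `|g 0 i - ratr (q 0 i)| < e.
Proof.
move=> e0.
have H : forall i : 'I_n, exists r : rat, `|g 0 i - ratr r| < e.
  move=> i; have ne : ball (g 0 i) e !=set0 by exists (g 0 i); exact: ballxx.
  have [x [bq [r _ rx]]] := @dense_rat R (ball (g 0 i) e) ne (ball_open _ _).
  by exists r; move: bq; rewrite -rx -ball_normE /=.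
have [f hf] := choice H.
by exists (\row_i f i) => i; rewrite mxE.
Qed.

Lemma lip_measurable d (T : measurableType d) (R : realType) n
  (phi : 'rV[R]_n -> R) (K : R) :
  0 <= K -> (forall a b, phi a <= phi b + K * \sum_(i < n) `|a 0 i - b 0 i|) ->
  forall v : T -> 'rV[R]_n, (forall i, measurable_fun setT (fun w => v w 0 i)) ->
  measurable_fun setT (fun w => phi (v w)).
Proof.
move=> K0 hphi v hv.
pose qv (k : nat) : 'rV[R]_n :=
  if (unpickle k : option 'rV[rat]_n) is Some q then map_mx ratr q else 0.
pose h k w := phi (qv k) + K * \sum_(i < n) `|v w 0 i - qv k 0 i|.
have mh : forall k, measurable_fun setT (h k).
  move=> k; apply: measurable_realfun.measurable_funD => //; apply: measurable_realfun.measurable_funM => //.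
  apply: measurable_sum => i; apply: measurableT_comp => //.
  exact: measurable_realfun.measurable_funB.
apply: (measurability _ (measurable_realfun.RGenInftyO.measurableE R)) => //.
move=> _ [_ [x ->] <-].
have -> : setT `&` (fun w => phi (v w)) @^-1` `]-oo, x[ =
    \bigcup_k (setT `&` h k @^-1` `]-oo, x[).
  apply/seteqP; split.
  - move=> w [_ /=]; rewrite in_itv /= => px.
    set a := x - phi (v w).
    have a0 : 0 < a by rewrite subr_gt0.
    have n0 : 0 <= n%:R :> R by [].
    set eps := a / ((2 * K + 1) * (n%:R + 1)).
    have eps0 : 0 < eps.
      by apply: divr_gt0 => //; apply: mulr_gt0; lra.
    have [q hq] := rat_approx (v w) eps0.
    exists (pickle q) => //; split => //=; rewrite in_itv /=.
    have qE : qv (pickle q) = map_mx ratr q by rewrite /qv pickleK.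
    rewrite /h qE.
    have hs : \sum_(i < n) `|v w 0 i - (map_mx ratr q : 'rV[R]_n) 0 i| <= n%:R * eps.
      apply: (@le_trans _ _ (\sum_(i < n) eps)).
        by apply: ler_sum => i _; rewrite mxE; exact: ltW.
      by rewrite sumr_const card_ord mulr_natl.
    have hp := hphi (map_mx ratr q) (v w).
    have hs' : \sum_(i < n) `|(map_mx ratr q : 'rV[R]_n) 0 i - v w 0 i| =
               \sum_(i < n) `|v w 0 i - (map_mx ratr q : 'rV[R]_n) 0 i|.
      by apply: eq_bigr => i _; rewrite distrC.
    rewrite hs' in hp.
    have E : eps * ((2 * K + 1) * (n%:R + 1)) = a.
      rewrite /eps mulrVK // unitfE; apply: lt0r_neq0; apply: mulr_gt0; lra.
    have hKs := ler_wpM2l K0 hs.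
    rewrite /a in E; nra.
  - move=> w [k _ [_ /=]]; rewrite in_itv /= => hk; split => //=; rewrite in_itv /=.
    by apply: le_lt_trans hk; apply: hphi.
by apply: bigcup_measurable => k _; exact: mh k measurableT _ (measurable_itv _).
Qed.

Section Dot.
Variables (R : realType) (n : nat).
Implicit Types (g h x y : 'rV[R]_n).
Lemma dotvC g x : dotv g x = dotv x g.
Proof. by apply: eq_bigr => i _; rewrite mulrC. Qed.
Lemma dotvDl g h x : dotv (g + h) x = dotv g x + dotv h x.
Proof. by rewrite /dotv -big_split; apply: eq_bigr => i _; rewrite mxE mulrDl. Qed.
Lemma dotvBl g h x : dotv (g - h) x = dotv g x - dotv h x.
Proof. by rewrite /dotv -sumrB; apply: eq_bigr => i _; rewrite !mxE mulrBl. Qed.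
Lemma dotvZl a g x : dotv (a *: g) x = a * dotv g x.
Proof. by rewrite /dotv mulr_sumr; apply: eq_bigr => i _; rewrite mxE mulrA. Qed.
Lemma dotvDr g x y : dotv g (x + y) = dotv g x + dotv g y.
Proof. by rewrite dotvC dotvDl !(dotvC g). Qed.
Lemma dotvBr g x y : dotv g (x - y) = dotv g x - dotv g y.
Proof. by rewrite dotvC dotvBl !(dotvC g). Qed.
Lemma dotvZr a g x : dotv g (a *: x) = a * dotv g x.
Proof. by rewrite dotvC dotvZl dotvC. Qed.
Lemma dotv0r g : dotv g 0 = 0.
Proof. by rewrite /dotv big1 // => i _; rewrite mxE mulr0. Qed.
Lemma dotv0l x : dotv 0 x = 0.
Proof. by rewrite dotvC dotv0r. Qed.
Lemma dotvNr g x : dotv g (- x) = - dotv g x.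
Proof. by rewrite -scaleN1r dotvZr mulN1r. Qed.
Lemma dotv_e g i : dotv 'e_i g = g 0 i.
Proof.
rewrite /dotv (bigD1 i) //= big1 ?addr0; first by rewrite mxE !eqxx mul1r.
by move=> j ji; rewrite mxE (negbTE ji) andbF mul0r.
Qed.
End Dot.

Section Dual.
Variables (R : realType) (n : nat) (N : 'rV[R]_n -> R).
Hypothesis hN : is_norm N.
Variable C : R.
Hypothesis hC : 0 < C.
Hypothesis hNC : forall x, N x <= C * dual_norm N x.

Local Notation D := (dual_norm N).
Let S g := [set dotv g x | x in [set x : 'rV[R]_n | N x <= 1]].

Lemma S_ne g : S g !=set0.
Proof. by exists 0; exists 0; rewrite /= ?(N0 hN) ?ler01 ?dotv0r. Qed.

Lemma N_eq0 x : N x = 0 -> x = 0.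
Proof. by case: hN => H _ _; apply: H. Qed.

Lemma NZ a x : N (a *: x) = `|a| * N x.
Proof. by case: hN => _ H _; apply: H. Qed.

Lemma NT x y : N (x + y) <= N x + N y.
Proof. by case: hN => _ _ H; apply: H. Qed.

Lemma S_sup g : has_sup (S g).
Proof.
split; first exact: S_ne.
apply: contrapT => nub.
have Dg : D g = 0 by rewrite /dual_norm sup_out // => -[].
have := hNC g; rewrite Dg mulr0 => Ng.
have g0 : g = 0 by apply: N_eq0; apply/eqP; rewrite eq_le Ng (N_ge0 hN).
apply: nub; exists 0 => _ [x _ <-]; by rewrite g0 dotv0l.
Qed.

Lemma D_ub g x : N x <= 1 -> dotv g x <= D g.
Proof. by move=> hx; apply: sup_upper_bound; [exact: S_sup| exists x]. Qed.

Lemma D_ge0 g : 0 <= D g.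
Proof. by rewrite -(dotv0r g); apply: D_ub; rewrite (N0 hN). Qed.

Lemma D_le g M : (forall x, N x <= 1 -> dotv g x <= M) -> D g <= M.
Proof. by move=> H; apply: ge_sup; [exact: S_ne| move=> _ [x hx <-]; exact: H]. Qed.

Lemma D0 : D 0 = 0.
Proof.
apply/eqP; rewrite eq_le D_ge0 andbT; apply: D_le => x _; by rewrite dotv0l.
Qed.

Lemma dot_le g x : dotv g x <= D g * N x.
Proof.
have [Nx0|Nx0] := eqVneq (N x) 0.
  by rewrite (N_eq0 Nx0) dotv0r (N0 hN) mulr0.
have Np : 0 < N x by rewrite lt_def Nx0 (N_ge0 hN).
have := D_ub g (x := (N x)^-1 *: x).
rewrite NZ ger0_norm ?invr_ge0 ?(N_ge0 hN) // mulVf // lexx dotvZr => /(_ isT) h.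
by rewrite -ler_pdivrMr // mulrC.
Qed.

Lemma dot_abs g x : `|dotv g x| <= D g * N x.
Proof.
rewrite ler_norml dot_le andbT lerNl -dotvNr -(NN hN x); exact: dot_le.
Qed.

Lemma D_scale a g : D (a *: g) <= `|a| * D g.
Proof.
apply: D_le => x hx; rewrite dotvZl.
apply: le_trans (ler_norm _) _; rewrite normrM ler_wpM2l //.
by apply: le_trans (dot_abs g x) _; rewrite ler_piMr ?D_ge0.
Qed.

Lemma D_lip a b : D a <= D b + (\sum_(j < n) D 'e_j) * \sum_(i < n) `|a 0 i - b 0 i|.
Proof.
apply: D_le => x hx.
have -> : dotv a x = dotv b x + dotv (a - b) x by rewrite -dotvDl addrC subrK.
apply: lerD; first exact: D_ub.
rewrite /dotv mulr_sumr; apply: ler_sum => i _; rewrite !mxE.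
apply: le_trans (ler_norm _) _; rewrite normrM mulrC ler_wpM2r //.
have := dot_abs 'e_i x; rewrite dotv_e => h.
apply: le_trans h _; apply: le_trans (_ : D 'e_i <= _).
  by rewrite ler_piMr ?D_ge0.
rewrite (bigD1 i) //= lerDl; apply: sumr_ge0 => j _; exact: D_ge0.
Qed.

Lemma D_N x : N x <= C * D x.
Proof. exact: hNC. Qed.
End Dual.

Section Taylor.
Variables (R : realType) (n : nat).
Variable phi : 'rV[R]_n -> R.
Variable g : 'rV[R]_n -> 'rV[R]_n.
Hypothesis phi_diff : forall y, differentiable phi y.
Hypothesis phi_grad : forall y h, 'd phi y h = dotv (g y) h.

Lemma line_derive (x h : 'rV[R]_n) (t : R) :
  is_derive t 1 (fun s => phi (x + s *: h)) (dotv (g (x + t *: h)) h).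
Proof.
have E : (fun s : R => s^-1 *: (((fun s => phi (x + s *: h)) \o shift t) (s *: 1)
            - phi (x + t *: h)))
       = (fun s : R => s^-1 *: ((phi \o shift (x + t *: h)) (s *: h) - phi (x + t *: h))).
  apply/funext => s /=; congr (_ *: (phi _ - _)).
  by rewrite /shift /= -[s%:A]/(s * 1) mulr1 scalerDl addrCA addrA.
split.
  rewrite /derivable E; exact: (diff_derivable (phi_diff _)).
by rewrite /derive E -/(derive phi _ h) deriveE // phi_grad.
Qed.
End Taylor.

Section Taylor2.
Variables (R : realType) (n : nat) (N : 'rV[R]_n -> R).
Hypothesis hN : is_norm N.
Variable C : R.
Hypothesis hC : 0 < C.
Hypothesis hNC : forall x, N x <= C * dual_norm N x.
Variable phi : 'rV[R]_n -> R.
Variable g : 'rV[R]_n -> 'rV[R]_n.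
Hypothesis phi_diff : forall y, differentiable phi y.
Hypothesis phi_grad : forall y h, 'd phi y h = dotv (g y) h.
Variable L : R.
Hypothesis hL : forall a b, dual_norm N (g a - g b) <= L * N (a - b).

Lemma taylor x h : `|phi (x + h) - phi x - dotv (g x) h| <= L * N h ^+ 2 / 2.
Proof.
set c1 := dotv (g x) h; set c2 := L * N h ^+ 2 / 2.
pose p := fun s : R => phi (x + s *: h).
have dp : forall t : R, is_derive t (1:R) p (dotv (g (x + t *: h)) h).
  by move=> t; apply: line_derive.
have Nh0 := N_ge0 hN h.
have key : forall t : R, 0 <= t -> `|dotv (g (x + t *: h)) h - c1| <= L * N h ^+ 2 * t.
  move=> t t0; rewrite /c1 -dotvBl.
  apply: le_trans (dot_abs hN hNC _ _) _.
  apply: le_trans (ler_wpM2r Nh0 (hL _ _)) _.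
  rewrite addrAC subrr add0r NZ // ger0_norm //.
  by rewrite le_eqVlt; apply/orP; left; apply/eqP; ring.
pose psi := (p - (c1 \*: id + c2 \*: (id * id))).
have dpsi : forall t : R, is_derive t (1:R) psi
    (dotv (g (x + t *: h)) h - (c1 *: 1 + c2 *: (id t *: 1 + id t *: 1))).
  by move=> t; apply: is_deriveB.
pose chi := (p - (c1 \*: id - c2 \*: (id * id))).
have dchi : forall t : R, is_derive t (1:R) chi
    (dotv (g (x + t *: h)) h - (c1 *: 1 - c2 *: (id t *: 1 + id t *: 1))).
  by move=> t; apply: is_deriveB.
have [t1 t1in Epsi] := MVT ltr01 (fun t _ => dpsi t)
  (derivable_within_continuous (fun t _ => @ex_derive _ _ _ _ _ _ _ (dpsi t))).
have [t2 t2in Echi] := MVT ltr01 (fun t _ => dchi t)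
  (derivable_within_continuous (fun t _ => @ex_derive _ _ _ _ _ _ _ (dchi t))).
move: t1in t2in; rewrite !in_itv /= => /andP[t10 _] /andP[t20 _].
have k1 := key t1 (ltW t10); have k2 := key t2 (ltW t20).
have ps t : psi t = phi (x + t *: h) - (c1 * t + c2 * (t * t)) by [].
have cs t : chi t = phi (x + t *: h) - (c1 * t - c2 * (t * t)) by [].
have sA (t : R) : t%:A = t by rewrite -[t%:A]/(t * 1) mulr1.
have sc (a b : R) : a *: b = a * b by [].
move: Epsi Echi; rewrite !ps !cs !sA !sc scale0r addr0 scale1r !mulr0 !mulr1 !addr0 !subr0.
move: k1 k2; rewrite /c2.
set A := dotv (g (x + t1 *: h)) h; set B := dotv (g (x + t2 *: h)) h.
move=> /ler_normlP [a1 a2] /ler_normlP [b1 b2] E1 E2.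
rewrite ler_norml; apply/andP; split; nra.
Qed.
End Taylor2.

Section RexpL.
Variables (d : measure_display) (T : measurableType d) (R : realType).
Variable P : probability T R.
Local Notation Ig f := (P.-integrable setT (fun w => (f w)%:E)).

Lemma intE (f : T -> R) : Ig f -> (Rexp P f)%:E = (\int[P]_w (f w)%:E)%E.
Proof. by move=> If; rewrite /Rexp fineK //; exact: integrable_fin_num. Qed.

Lemma IgD (f g : T -> R) : Ig f -> Ig g -> Ig (fun w => f w + g w).
Proof.
move=> If Ig'; apply: eq_integrable (integrableD _ If Ig') => //; try by move=> w _ /=; rewrite EFinD.
Qed.

Lemma IgZ (k : R) (f : T -> R) : Ig f -> Ig (fun w => k * f w).
Proof.
move=> If; apply: eq_integrable (integrableZl _ k If) => //; try by move=> w _ /=; rewrite EFinM.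
Qed.

Lemma IgB (f g : T -> R) : Ig f -> Ig g -> Ig (fun w => f w - g w).
Proof.
move=> If Ig'; apply: eq_integrable (integrableB _ If Ig') => //; try by move=> w _ /=; rewrite EFinB.
Qed.

Lemma IgN (f : T -> R) : Ig f -> Ig (fun w => - f w).
Proof.
move=> If; apply: eq_integrable (IgZ (-1) If) => //; try by move=> w _ /=; rewrite mulN1r.
Qed.

Lemma Ig_sum n (f : 'I_n -> T -> R) : (forall i, Ig (f i)) ->
  Ig (fun w => \sum_(i < n) f i w).
Proof.
move=> If; apply: eq_integrable (@integrable_sum _ _ _ P setT measurableT _
  (index_enum 'I_n) xpredT (fun i w => (f i w)%:E) (fun i _ => If i)) => //.
by move=> w _ /=; rewrite sumEFin.
Qed.

Lemma RexpD (f g : T -> R) : Ig f -> Ig g ->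
  Rexp P (fun w => f w + g w) = Rexp P f + Rexp P g.
Proof.
move=> If Ig'; apply: EFin_inj; rewrite EFinD !intE //; last exact: IgD.
rewrite -integralD_EFin //; apply: eq_integral => w _ /=; by rewrite EFinD.
Qed.

Lemma RexpZ (k : R) (f : T -> R) : Ig f ->
  Rexp P (fun w => k * f w) = k * Rexp P f.
Proof.
move=> If; apply: EFin_inj; rewrite EFinM !intE //; last exact: IgZ.
rewrite -integralZl //; apply: eq_integral => w _ /=; by rewrite EFinM.
Qed.

Lemma RexpB (f g : T -> R) : Ig f -> Ig g ->
  Rexp P (fun w => f w - g w) = Rexp P f - Rexp P g.
Proof.
move=> If Ig'; rewrite RexpD //; last exact: IgN.
have -> : (fun w => - g w) = (fun w => -1 * g w) by apply/funext => w; rewrite mulN1r.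
by rewrite (RexpZ (-1) Ig') mulN1r.
Qed.

Lemma Rexp_sum n (f : 'I_n -> T -> R) : (forall i, Ig (f i)) ->
  Rexp P (fun w => \sum_(i < n) f i w) = \sum_(i < n) Rexp P (f i).
Proof.
move=> If; apply: EFin_inj; rewrite intE; last exact: Ig_sum.
rewrite -sumEFin; under eq_bigr do rewrite intE //.
rewrite -integral_sum //; apply: eq_integral => w _; by rewrite sumEFin.
Qed.

Lemma Rexp_le (f h : T -> R) : Ig f -> measurable_fun setT h ->
  (forall w, `|f w| <= h w) -> ((Rexp P f)%:E <= \int[P]_w (h w)%:E)%E.
Proof.
move=> If mh hf; rewrite intE //.
apply: le_trans (lee_abs _) _.
apply: le_trans (le_abse_integral _ _ _) _ => //.
  exact: measurable_int If.
apply: ge0_le_integral => //.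
- have mf : measurable_fun setT f by apply/measurable_realfun.measurable_EFinP; exact: measurable_int If.
  apply/measurable_realfun.measurable_EFinP; apply: measurableT_comp => //.
- exact/measurable_realfun.measurable_EFinP.
- by move=> w _ /=; rewrite lee_fin.
Qed.

Lemma Rexp_abs (f : T -> R) (c : R) : Ig f -> (forall w, `|f w| <= c) ->
  `|Rexp P f| <= c.
Proof.
move=> If hf.
have hf' : forall w, `|- f w| <= c by move=> w; rewrite normrN.
have c0 : 0 <= c by apply: le_trans (hf point) ; exact: normr_ge0.
have := Rexp_le If (measurable_cst c) hf.
have := Rexp_le (IgN If) (measurable_cst c) hf'.
have ic : (\int[P]_(w in setT) (cst c w)%:E = c%:E)%E.
  have := integral_cst P measurableT c%:E; rewrite /= => ->; rewrite probability_setT mule1 //.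
rewrite ic !lee_fin.
have -> : (fun w => - f w) = (fun w => -1 * f w) by apply/funext => w; rewrite mulN1r.
rewrite (RexpZ (-1) If) mulN1r => h1 h2.
by rewrite ler_norml h2 andbT lerNl.
Qed.
End RexpL.

Unset Implicit Arguments.
Set Strict Implicit.

Theorem lemma2
  (R : realType) (n : nat)
  (N : 'rV[R]_n -> R) (hN : is_norm N)
  (C : R) (hC : 0 < C) (hNC : forall x, N x <= C * dual_norm N x)
  (* the random parameter xi and the stochastic functions f(.;xi) *)
  (dXi : measure_display) (Xi : measurableType dXi) (PXi : probability Xi R)
  (F : 'rV[R]_n -> Xi -> R) (gF : 'rV[R]_n -> Xi -> 'rV[R]_n) (G L : R)
  (* Assumption (A) *)
  (A_diff : forall xi x, differentiable (fun y => F y xi) x)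
  (A_grad : forall xi x h, 'd (fun y => F y xi) x h = dotv (gF x xi) h)
  (A_lip : forall xi x y, `|F x xi - F y xi| <= G * N (x - y))
  (A_smooth : forall xi x y, dual_norm N (gF x xi - gF y xi) <= L * N (x - y))
  (* f(x) = E_xi[f(x;xi)] is well defined, differentiable with gradient gf *)
  (f_int : forall x, PXi.-integrable setT (fun xi => (F x xi)%:E))
  (gf : 'rV[R]_n -> 'rV[R]_n)
  (f_diff : forall x, differentiable (fun y => Rexp PXi (F y)) x)
  (f_grad : forall x h, 'd (fun y => Rexp PXi (F y)) x h = dotv (gf x) h)
  (* Assumption (B) *)
  (B_int : forall x i, PXi.-integrable setT (fun xi => (gF x xi 0 i)%:E))
  (B_eq : forall x, vexp PXi (gF x) = gf x)
  (* Assumption (E): u ~ D is a random vector on a probability space *)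
  (dOm : measure_display) (Om : measurableType dOm) (P : probability Om R)
  (u : Om -> 'rV[R]_n) (u_meas : forall i, measurable_fun setT (fun w => u w 0 i))
  (delta : R) (hdelta : 0 < delta)
  (E_int : forall g i, P.-integrable setT (fun w => (dotv g (u w) * u w 0 i)%:E))
  (E_eq : forall g, vexp P (fun w => dotv g (u w) *: u w) = delta^-1 *: g)
  (nu : R) (hnu : 0 < nu) :
  forall x : 'rV[R]_n,
    ((dual_norm N
        (vexp P (fun w => (delta / nu * (Rexp PXi (F (x + nu *: u w))
                                         - Rexp PXi (F x))) *: u w) - gf x))%:E
      <= (delta * nu * C ^+ 2 * L / 2)%:E
         * Eexp P (fun w => dual_norm N (u w) ^+ 3)%R)%E
    /\
    (forall xi : Xi,
      (Eexp P (fun w => dual_norm N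
                 ((delta / nu * (F (x + nu *: u w) xi - F x xi)) *: u w) ^+ 2)%R
       <= (C ^+ 4 * L ^+ 2 * delta ^+ 2 * nu ^+ 2 / 2)%:E
            * Eexp P (fun w => dual_norm N (u w) ^+ 6)%R
          + (2 * delta ^+ 2)%:E
            * Eexp P (fun w => dotv (gF x xi) (u w) ^+ 2 * dual_norm N (u w) ^+ 2)%R)%E).
Proof.
move=> x.
have Nge0 := N_ge0 hN.
set M := \sum_(j < n) N 'e_j.
have M0 : 0 <= M by apply: sumr_ge0 => j _; exact: Nge0.
have NS : forall z, N z <= M * \sum_(i < n) `|z 0 i|.
  move=> z; apply: le_trans (N_sum hN z) _; rewrite mulr_sumr.
  apply: ler_sum => i _; rewrite mulrC ler_wpM2r //.
  by rewrite /M (bigD1 i) //= lerDl; apply: sumr_ge0 => j _; exact: Nge0.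
have NSd : forall a b, N (a - b) <= M * \sum_(i < n) `|a 0 i - b 0 i|.
  move=> a b; apply: le_trans (NS _) _; apply: ler_wpM2l => //.
  by rewrite le_eqVlt; apply/orP; left; apply/eqP; apply: eq_bigr => i _; rewrite !mxE.
have Flip : forall xi a b, F a xi <= F b xi + (`|G| * M) * \sum_(i < n) `|a 0 i - b 0 i|.
  move=> xi a b; rewrite -lerBlDl; apply: le_trans (ler_norm _) _.
  apply: le_trans (A_lip xi a b) _; rewrite -mulrA.
  apply: le_trans (_ : G * N (a - b) <= `|G| * N (a - b)) _.
    by rewrite ler_wpM2r // ler_norm.
  by rewrite ler_wpM2l.
set f := fun y => Rexp PXi (F y).
have fB : forall a b, f a - f b = Rexp PXi (fun xi => F a xi - F b xi).
  by move=> a b; rewrite /f RexpB.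
have flip : forall a b, f a <= f b + (`|G| * M) * \sum_(i < n) `|a 0 i - b 0 i|.
  move=> a b; rewrite -lerBlDl; apply: le_trans (ler_norm _) _.
  rewrite fB; apply: Rexp_abs; first by apply: IgB.
  move=> xi; apply: le_trans (A_lip xi a b) _; rewrite -mulrA.
  apply: le_trans (_ : G * N (a - b) <= `|G| * N (a - b)) _.
    by rewrite ler_wpM2r // ler_norm.
  by rewrite ler_wpM2l.
have Dlip := D_lip hN hNC.
have DK0 : 0 <= \sum_(j < n) dual_norm N 'e_j.
  by apply: sumr_ge0 => j _; exact: (D_ge0 hN hNC).
have GM0 : 0 <= `|G| * M by rewrite mulr_ge0.
have mv : forall i, measurable_fun setT (fun w => (x + nu *: u w) 0 i).
  move=> i; have -> : (fun w => (x + nu *: u w) 0 i) = (fun w => x 0 i + nu * u w 0 i).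
    by apply/funext => w; rewrite !mxE.
  by apply: measurable_realfun.measurable_funD => //; apply: measurable_realfun.measurable_funM.
have mF : forall xi, measurable_fun setT (fun w => F (x + nu *: u w) xi).
  by move=> xi; apply: (lip_measurable GM0 (Flip xi)).
have mf : measurable_fun setT (fun w => f (x + nu *: u w)).
  exact: (lip_measurable GM0 flip).
have mDu : measurable_fun setT (fun w => dual_norm N (u w)).
  exact: (lip_measurable DK0 Dlip).
have tF : forall xi h, `|F (x + h) xi - F x xi - dotv (gF x xi) h| <= L * N h ^+ 2 / 2.
  by move=> xi h; apply: (taylor hN hNC (A_diff xi) (A_grad xi) (A_smooth xi)).
have gfE : forall i, gf x 0 i = Rexp PXi (fun xi => gF x xi 0 i).
  by move=> i; rewrite -B_eq mxE.
have Igi : forall (h : 'rV[R]_n) i, PXi.-integrable setT (fun xi => (gF x xi 0 i * h 0 i)%:E).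
  move=> h i; apply: eq_integrable (IgZ (h 0 i) (B_int x i)) => //; try by move=> w _ /=; rewrite mulrC.
have Igd : forall h, PXi.-integrable setT (fun xi => (dotv (gF x xi) h)%:E).
  by move=> h; rewrite /dotv; apply: Ig_sum => i.
have dgf : forall h, dotv (gf x) h = Rexp PXi (fun xi => dotv (gF x xi) h).
  move=> h; rewrite /dotv Rexp_sum //.
  apply: eq_bigr => i _; rewrite gfE mulrC -RexpZ //; congr Rexp; apply/funext => xi; by rewrite mulrC.
have tf : forall h, `|f (x + h) - f x - dotv (gf x) h| <= L * N h ^+ 2 / 2.
  move=> h; rewrite fB dgf -RexpB //; last exact: IgB.
  by apply: Rexp_abs; [apply: IgB => //; apply: IgB | move=> xi; exact: tF].
have L_neg : L < 0 -> forall h : 'rV[R]_n, h = 0.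
  move=> L0 h; apply: (N_eq0 hN); have th := tf h.
  have : 0 <= L * N h ^+ 2 / 2 by apply: le_trans th.
  have := Nge0 h => h0 h1; apply/eqP; rewrite eq_le h0 andbT.
  have h2 : N h ^+ 2 <= 0.
    rewrite leNgt; apply/negP => hp.
    have : L * N h ^+ 2 < 0 by rewrite pmulr_llt0.
    lra.
  rewrite expr2 in h2; nra.
have Du0 := D_ge0 hN hNC.
have dabs := dot_abs hN hNC.
have uij : forall i j, P.-integrable setT (fun w => (`|u w 0 j * u w 0 i|)%:E).
  move=> i j; have := integrable_norm (E_int 'e_j i).
  by apply: eq_integrable => // w _ /=; rewrite dotv_e.
have fd : forall w, `|f (x + nu *: u w) - f x| <= `|G| * M * (nu * \sum_(j < n) `|u w 0 j|).
  move=> w; have E : \sum_(j < n) `|(x + nu *: u w) 0 j - x 0 j| = nu * \sum_(j < n) `|u w 0 j|.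
    rewrite mulr_sumr; apply: eq_bigr => j _; rewrite !mxE addrAC subrr add0r normrM gtr0_norm //.
  have E' : \sum_(j < n) `|x 0 j - (x + nu *: u w) 0 j| = nu * \sum_(j < n) `|u w 0 j|.
    by rewrite -E; apply: eq_bigr => j _; rewrite distrC.
  have h1 := flip (x + nu *: u w) x; have h2 := flip x (x + nu *: u w).
  rewrite E in h1; rewrite E' in h2; rewrite ler_norml; apply/andP; split; lra.
set V := fun w => (delta / nu * (f (x + nu *: u w) - f x)) *: u w.
have mV : forall i, measurable_fun setT (fun w => V w 0 i).
  move=> i; have -> : (fun w => V w 0 i) =
      (fun w => delta / nu * (f (x + nu *: u w) - f x) * u w 0 i).
    by apply/funext => w; rewrite /V mxE.
  apply: measurable_realfun.measurable_funM => //.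
  apply: measurable_realfun.measurable_funM => //.
  exact: measurable_realfun.measurable_funB.
have IV : forall i, P.-integrable setT (fun w => (V w 0 i)%:E).
  move=> i.
  have IB : P.-integrable setT (fun w =>
      (delta * (`|G| * M) * \sum_(j < n) `|u w 0 j * u w 0 i|)%:E).
    by apply: IgZ; apply: Ig_sum => j; exact: uij.
  apply: le_integrable IB => //.
    by apply/measurable_realfun.measurable_EFinP; exact: mV.
  move=> w _; rewrite /= !lee_fin /V mxE.
  rewrite [X in _ <= X]ger0_norm; last first.
    by apply: mulr_ge0; [apply: mulr_ge0 => //; exact: ltW| apply: sumr_ge0 => j _].
  suff h : `|delta / nu * (f (x + nu *: u w) - f x) * u w 0 i| <=
      delta * (`|G| * M) * \sum_(j < n) `|u w 0 j * u w 0 i| by exact: h.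
  rewrite normrM normrM (gtr0_norm (divr_gt0 hdelta hnu)).
  have fdw := fd w.
  have -> : \sum_(j < n) `|u w 0 j * u w 0 i| = (\sum_(j < n) `|u w 0 j|) * `|u w 0 i|.
    by rewrite mulr_suml; apply: eq_bigr => j _; rewrite normrM.
  set S := \sum_(j < n) `|u w 0 j|.
  have S0 : 0 <= S by apply: sumr_ge0.
  have ui0 : 0 <= `|u w 0 i| by [].
  have -> : delta * (`|G| * M) * (S * `|u w 0 i|) =
      delta / nu * (`|G| * M * (nu * S)) * `|u w 0 i|.
    by field; apply/lt0r_neq0.
  apply: ler_wpM2r => //; apply: ler_wpM2l => //.
  by apply: ltW; apply: divr_gt0.
have Ee : forall i, Rexp P (fun w => dotv (gf x) (u w) * u w 0 i) = delta^-1 * gf x 0 i.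
  move=> i; have := congr1 (fun m : 'rV_n => m 0 i) (E_eq (gf x)).
  rewrite /vexp !mxE /= => <-; congr Rexp; apply/funext => w; by rewrite mxE.
have Iy : forall i, P.-integrable setT
    (fun w => (V w 0 i - delta * (dotv (gf x) (u w) * u w 0 i))%:E).
  by move=> i; apply: IgB => //; apply: IgZ.
have zE : forall i, (vexp P V - gf x) 0 i =
    Rexp P (fun w => V w 0 i - delta * (dotv (gf x) (u w) * u w 0 i)).
  move=> i; rewrite RexpB //; last exact: IgZ.
  rewrite RexpZ // Ee mulrA mulfV ?mul1r; last exact: lt0r_neq0.
  by rewrite !mxE.
split.
  have [L0|Lneg] := leP 0 L; last first.
    rewrite (L_neg Lneg (vexp P V - gf x)) (D0 hN hNC).
    have -> : (fun w => dual_norm N (u w) ^+ 3) = (fun w => 0).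
      by apply/funext => w; rewrite (L_neg Lneg (u w)) (D0 hN hNC) expr0n.
    by rewrite /Eexp integral0 mule0.
  set c := delta * nu * C ^+ 2 * L / 2.
  have c0 : 0 <= c.
    by rewrite /c; apply: mulr_ge0 => //; apply: mulr_ge0 => //;
      apply: mulr_ge0 => //; [apply: mulr_ge0; exact: ltW | exact: sqr_ge0].
  set H := fun w => c * dual_norm N (u w) ^+ 3.
  have mH : measurable_fun setT H.
    apply: measurable_realfun.measurable_funM => //.
    exact: measurable_realfun.measurable_funX.
  have -> : (c%:E * Eexp P (fun w => (dual_norm N (u w) ^+ 3)%R))%E = (\int[P]_w (H w)%:E)%E.
    rewrite /Eexp -ge0_integralZl_EFin //.
    - by move=> w _; rewrite lee_fin; apply: exprn_ge0.
    - apply/measurable_realfun.measurable_EFinP.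
      exact: measurable_realfun.measurable_funX.
  have Hb : forall s, N s <= 1 -> forall w,
      `|\sum_(i < n) (V w 0 i - delta * (dotv (gf x) (u w) * u w 0 i)) * s 0 i| <= H w.
    move=> s hs w.
    set d := dotv (gf x) (u w).
    set Df := f (x + nu *: u w) - f x.
    have nu0 : nu != 0 by apply: lt0r_neq0.
    have -> : \sum_(i < n) (V w 0 i - delta * (d * u w 0 i)) * s 0 i =
        (delta / nu * (Df - nu * d)) * dotv (u w) s.
      rewrite /dotv mulr_sumr; apply: eq_bigr => i _; rewrite /V mxE.
      by rewrite -/Df; field.
    have hr : `|Df - nu * d| <= L * (nu * N (u w)) ^+ 2 / 2.
      by have := tf (nu *: u w); rewrite dotvZr NZ // (gtr0_norm hnu).
    have hds : `|dotv (u w) s| <= dual_norm N (u w).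
      apply: le_trans (dabs _ _) _; rewrite ler_piMr //; exact: D_ge0.
    have hNu := hNC (u w); have Nu0 := Nge0 (u w).
    have Dw0 := Du0 (u w).
    rewrite normrM normrM (gtr0_norm (divr_gt0 hdelta hnu)).
    set a := `|Df - nu * d|; set b := `|dotv (u w) s|.
    set p := N (u w); set q := dual_norm N (u w).
    have a0 : 0 <= a by exact: normr_ge0.
    have b0 : 0 <= b by exact: normr_ge0.
    have h1 : a * b <= L * (nu * p) ^+ 2 / 2 * q by apply: ler_pM.
    have h2 : (nu * p) ^+ 2 <= (nu * (C * q)) ^+ 2.
      rewrite ler_sqr; [apply: ler_wpM2l => //; exact: ltW| |];
        rewrite nnegrE; apply: mulr_ge0 => //; try exact: ltW.
      by apply: mulr_ge0 => //; exact: ltW.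
    have h3 : L * (nu * p) ^+ 2 / 2 * q <= L * (nu * (C * q)) ^+ 2 / 2 * q.
      apply: ler_wpM2r => //; apply: ler_wpM2r => //; apply: ler_wpM2l => //.
    have h4 := le_trans h1 h3.
    rewrite /H /c -mulrA; apply: le_trans (ler_wpM2l (ltW (divr_gt0 hdelta hnu)) h4) _.
    by rewrite le_eqVlt; apply/orP; left; apply/eqP; rewrite -/q; field.
  have IH0 : (0 <= \int[P]_w (H w)%:E)%E.
    by apply: integral_ge0 => w _; rewrite lee_fin /H; apply: mulr_ge0 => //; apply: exprn_ge0.
  move: IH0; case E: (\int[P]_w (H w)%:E)%E => [m| |] // m0; last exact: leey.
  rewrite lee_fin; apply: (D_le hN) => s hs.
  have -> : dotv (vexp P V - gf x) s =
      Rexp P (fun w => \sum_(i < n) (V w 0 i - delta * (dotv (gf x) (u w) * u w 0 i)) * s 0 i).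
    rewrite Rexp_sum; last first.
      by move=> i; apply: eq_integrable (IgZ (s 0 i) (Iy i)) => //; try by move=> w _ /=; rewrite mulrC.
    apply: eq_bigr => i _; rewrite zE mulrC -RexpZ //.
    by congr Rexp; apply/funext => w; rewrite mulrC.
  rewrite -lee_fin -E; apply: Rexp_le => //.
    apply: Ig_sum => i.
    by apply: eq_integrable (IgZ (s 0 i) (Iy i)) => //; try by move=> w _ /=; rewrite mulrC.
  exact: Hb.
move=> xi.
set a := fun w => delta / nu * (F (x + nu *: u w) xi - F x xi).
set g0 := gF x xi.
set c1 := C ^+ 4 * L ^+ 2 * delta ^+ 2 * nu ^+ 2 / 2.
set c2 := 2 * delta ^+ 2.
have c10 : 0 <= c1.
  rewrite /c1; apply: mulr_ge0 => //; apply: mulr_ge0; last exact: sqr_ge0.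
  apply: mulr_ge0; last exact: sqr_ge0.
  by apply: mulr_ge0; [apply: exprn_ge0; exact: ltW| exact: sqr_ge0].
have c20 : 0 <= c2 by rewrite /c2; apply: mulr_ge0 => //; exact: sqr_ge0.
have ma : measurable_fun setT a.
  apply: measurable_realfun.measurable_funM => //.
  exact: measurable_realfun.measurable_funB.
have mDa : measurable_fun setT (fun w => dual_norm N (a w *: u w)).
  apply: (lip_measurable DK0 Dlip) => i.
  have -> : (fun w => (a w *: u w) 0 i) = (fun w => a w * u w 0 i).
    by apply/funext => w; rewrite mxE.
  exact: measurable_realfun.measurable_funM.
have md : measurable_fun setT (fun w => dotv g0 (u w)).
  rewrite /dotv; apply: measurable_sum => i.
  exact: measurable_realfun.measurable_funM.
have mD6 : measurable_fun setT (fun w => dual_norm N (u w) ^+ 6).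
  exact: measurable_realfun.measurable_funX.
have mdD : measurable_fun setT (fun w => dotv g0 (u w) ^+ 2 * dual_norm N (u w) ^+ 2).
  by apply: measurable_realfun.measurable_funM; exact: measurable_realfun.measurable_funX.
rewrite /Eexp -ge0_integralZl_EFin //; first last.
  by apply/measurable_realfun.measurable_EFinP.
  by move=> w _; rewrite lee_fin; apply: exprn_ge0.
rewrite -ge0_integralZl_EFin //; first last.
  by apply/measurable_realfun.measurable_EFinP.
  by move=> w _; rewrite lee_fin; apply: mulr_ge0; exact: sqr_ge0.
rewrite -ge0_integralD //; first last.
- rewrite (_ : (fun w => _) = (fun w => (c2 * (dotv g0 (u w) ^+ 2 * dual_norm N (u w) ^+ 2))%:E)%E);
    last by apply/funext => w; rewrite EFinM.
  apply/measurable_realfun.measurable_EFinP; exact: measurable_realfun.measurable_funM.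
- by move=> w _; rewrite -EFinM lee_fin; apply: mulr_ge0 => //; apply: mulr_ge0; exact: sqr_ge0.
- rewrite (_ : (fun w => _) = (fun w => (c1 * (dual_norm N (u w) ^+ 6))%:E)%E);
    last by apply/funext => w; rewrite EFinM.
  apply/measurable_realfun.measurable_EFinP; exact: measurable_realfun.measurable_funM.
- by move=> w _; rewrite -EFinM lee_fin; apply: mulr_ge0 => //; apply: exprn_ge0.
apply: ge0_le_integral => //.
- by move=> w _; rewrite lee_fin; exact: sqr_ge0.
- apply/measurable_realfun.measurable_EFinP; exact: measurable_realfun.measurable_funX.
- rewrite (_ : (fun w => _) = (fun w => (c1 * (dual_norm N (u w) ^+ 6) +
      c2 * (dotv g0 (u w) ^+ 2 * dual_norm N (u w) ^+ 2))%:E)%E);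
    last by apply/funext => w; rewrite EFinD !EFinM.
  apply/measurable_realfun.measurable_EFinP; apply: measurable_realfun.measurable_funD;
    exact: measurable_realfun.measurable_funM.
move=> w _; rewrite -!EFinM -EFinD lee_fin.
rewrite -/(a w).
set q := dual_norm N (u w); set p := N (u w); set dd := dotv g0 (u w).
set r := F (x + nu *: u w) xi - F x xi - nu * dd.
have nu0 : nu != 0 by apply: lt0r_neq0.
have aE : a w = delta / nu * (nu * dd + r) by rewrite /r /a /dd; congr (_ * _); ring.
have hr : `|r| <= L * (nu * p) ^+ 2 / 2.
  by have := tF xi (nu *: u w); rewrite dotvZr NZ // (gtr0_norm hnu).
have q0 : 0 <= q := Du0 (u w).
have p0 : 0 <= p := Nge0 (u w).
have hp : p <= C * q := hNC (u w).
have hDa : dual_norm N (a w *: u w) <= `|a w| * q := D_scale hN hNC _ _.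
have Da0 : 0 <= dual_norm N (a w *: u w) := Du0 _.
have s1 : dual_norm N (a w *: u w) ^+ 2 <= a w ^+ 2 * q ^+ 2.
  have : dual_norm N (a w *: u w) ^+ 2 <= (`|a w| * q) ^+ 2.
    by rewrite ler_sqr // nnegrE // mulr_ge0.
  by rewrite exprMn (real_normK (num_real _)).
have hr2 : r ^+ 2 <= (L * (nu * p) ^+ 2 / 2) ^+ 2.
  rewrite -(real_normK (num_real r)) ler_sqr // nnegrE //; exact: le_trans hr.
have hp4 : p ^+ 4 <= C ^+ 4 * q ^+ 4.
  rewrite -exprMn; apply: lerXn2r => //; rewrite nnegrE //; apply: mulr_ge0 => //; exact: ltW.
have hr3 : r ^+ 2 <= L ^+ 2 * nu ^+ 4 * C ^+ 4 * q ^+ 4 / 4.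
  apply: le_trans hr2 _.
  have -> : (L * (nu * p) ^+ 2 / 2) ^+ 2 = L ^+ 2 * nu ^+ 4 * p ^+ 4 / 4.
    by field.
  apply: ler_wpM2r => //; rewrite -(mulrA (L ^+ 2 * nu ^+ 4)).
  apply: ler_wpM2l => //; apply: mulr_ge0; first exact: sqr_ge0.
  by apply: exprn_ge0; exact: ltW.
have s2 : (nu * dd + r) ^+ 2 <= 2 * nu ^+ 2 * dd ^+ 2 + 2 * r ^+ 2.
  have := sqr_ge0 (nu * dd - r); nra.
apply: le_trans s1 _; rewrite aE.
have -> : (delta / nu * (nu * dd + r)) ^+ 2 * q ^+ 2 =
    (delta / nu) ^+ 2 * q ^+ 2 * (nu * dd + r) ^+ 2 by ring.
apply: le_trans (ler_wpM2l _ s2) _.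
  by apply: mulr_ge0; exact: sqr_ge0.
have q2 : 0 <= (delta / nu) ^+ 2 * q ^+ 2 by apply: mulr_ge0; exact: sqr_ge0.
have := ler_wpM2l q2 hr3 => h3.
have E1 : (delta / nu) ^+ 2 * q ^+ 2 * (2 * nu ^+ 2 * dd ^+ 2 + 2 * r ^+ 2) =
    c2 * (dd ^+ 2 * q ^+ 2) + 2 * ((delta / nu) ^+ 2 * q ^+ 2 * r ^+ 2).
  by rewrite /c2; field.
have E2 : (delta / nu) ^+ 2 * q ^+ 2 * (L ^+ 2 * nu ^+ 4 * C ^+ 4 * q ^+ 4 / 4) =
    c1 * q ^+ 6 / 2.
  by rewrite /c1; field.
rewrite E1; rewrite E2 in h3; lra.
Qed.
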